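(* Consider a population of $N$ units, $M$ of which have a certain attribute, and a positive integer $r\le M$. Units are sampled without replacement until $r$ units with the attribute are observed; let $\boldsymbol n$ be the number of units checked, so that $\Pr\{\boldsymbol n=n\mid M\}=\binom{n-1}{r-1}\binom{N-n}{M-r}/\binom NM$ for $r\le n\le N$. Let $I_{\boldsymbol n}$ be the support of $\boldsymbol n$, and let $\widehat M=\widehat M(n)$ be a function of $n\in I_{\boldsymbol n}$ taking values in $\{m\in\mathbb{Z}:r\le m\le N\}$. Then $$\Pr\{\boldsymbol n\le n\mid M\}\le\frac{\binom N{\widehat M}\binom{N-n}{M-r}}{\binom NM\binom{N-n}{\widehat M-r}}=\frac{\binom Mr\binom{N-M}{n-r}}{\binom{\widehat M}r\binom{N-\widehat M}{n-r}}\quad\text{for } n\in I_{\boldsymbol n}\text{ such that }\widehat M(n)\ge M,$$ $$\Pr\{\boldsymbol n\ge n\mid M\}\le\frac{\binom N{\widehat M}\binom{N-n}{M-r}}{\binom NM\binom{N-n}{\widehat M-r}}=\frac{\binom Mr\binom{N-M}{n-r}}{\binom{\widehat M}r\binom{N-\widehat M}{n-r}}\quad\text{for } n\in I_{\boldsymbol n}\text{ such that }\widehat M(n)\le M.$$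
   Context: $\Pr\{\cdot\mid M\}$ denotes probability when the population contains $M$ units with the attribute. *)

(* Defs.v *)
From mathcomp Require Import all_boot all_order all_algebra.
Set Implicit Arguments. Unset Strict Implicit. Unset Printing Implicit Defensive.
Import Order.TTheory GRing.Theory Num.Theory.
Local Open Scope ring_scope.

Section InverseHypergeometric.
Variable R : realFieldType.

Definition ihg_pmf (N M r n : nat) : R :=
  ('C(n.-1, r.-1) * 'C(N - n, M - r))%:R / ('C(N, M))%:R.

Definition ihg_cdf_le (N M r n : nat) : R :=
  \sum_(r <= j < n.+1) ihg_pmf N M r j.

Definition ihg_cdf_ge (N M r n : nat) : R :=
  \sum_(n <= j < N.+1) ihg_pmf N M r j.

Definition ihg_support (N M r n : nat) : bool :=
  [&& (r <= n)%N, (n <= N)%N & 0 < ihg_pmf N M r n].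

Definition ihg_bound1 (N M r n Mh : nat) : R :=
  ('C(N, Mh) * 'C(N - n, M - r))%:R / ('C(N, M) * 'C(N - n, Mh - r))%:R.

Definition ihg_bound2 (N M r n Mh : nat) : R :=
  ('C(M, r) * 'C(N - M, n - r))%:R / ('C(Mh, r) * 'C(N - Mh, n - r))%:R.

End InverseHypergeometric.

(* Main.v *)
Require Import Defs.
From mathcomp Require Import all_boot all_order all_algebra zify ring lra.
Set Implicit Arguments. Unset Strict Implicit. Unset Printing Implicit Defensive.

Import Order.TTheory GRing.Theory Num.Theory.
Lemma bin_cons m m' b : m <= m' ->
  'C(m, b.+1) * 'C(m', b) <= 'C(m, b) * 'C(m', b.+1).
Proof.
move=> le.
rewrite -(leq_pmul2r (ltn0Sn b)).
have e1 := mul_bin_left m b. have e2 := mul_bin_left m' b.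
have -> : 'C(m, b.+1) * 'C(m', b) * b.+1 = (b.+1 * 'C(m, b.+1)) * 'C(m', b) by ring.
have -> : 'C(m, b) * 'C(m', b.+1) * b.+1 = 'C(m, b) * (b.+1 * 'C(m', b.+1)) by ring.
rewrite e1 e2.
have -> : (m - b) * 'C(m, b) * 'C(m', b) = ('C(m, b) * 'C(m', b)) * (m - b) by ring.
have -> : 'C(m, b) * ((m' - b) * 'C(m', b)) = ('C(m, b) * 'C(m', b)) * (m' - b) by ring.
apply: leq_mul => //; lia.
Qed.

Lemma bin_ratio m m' a b : m <= m' -> a <= b ->
  'C(m', a) * 'C(m, b) <= 'C(m, a) * 'C(m', b).
Proof.
move=> le /subnKC <-; elim: (b - a) => [|k IH]; first by rewrite addn0 mulnC.
rewrite addnS.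
have hc := bin_cons (a + k) le.
case: (posnP 'C(m', a + k)) => h0.
  have : m' < a + k by rewrite ltnNge -bin_gt0 h0.
  move=> lt; rewrite (@bin_small m) ?muln0 //; lia.
rewrite -(leq_pmul2r h0).
apply: (@leq_trans ('C(m, a + k) * 'C(m', a) * 'C(m', (a + k).+1))).
  have -> : 'C(m', a) * 'C(m, (a + k).+1) * 'C(m', a + k) =
     'C(m', a) * ('C(m, (a + k).+1) * 'C(m', a + k)) by ring.
  have -> : 'C(m, a + k) * 'C(m', a) * 'C(m', (a + k).+1) =
     'C(m', a) * ('C(m, a + k) * 'C(m', (a + k).+1)) by ring.
  by rewrite leq_mul2l hc orbT.
have -> : 'C(m, a + k) * 'C(m', a) * 'C(m', (a + k).+1) =
   ('C(m', a) * 'C(m, a + k)) * 'C(m', (a + k).+1) by ring.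
have -> : 'C(m, a) * 'C(m', (a + k).+1) * 'C(m', a + k) =
   ('C(m, a) * 'C(m', a + k)) * 'C(m', (a + k).+1) by ring.
by rewrite leq_mul2r IH orbT.
Qed.

Lemma Ssum N a b : \sum_(i < N.+1) 'C(i, a) * 'C(N - i, b) = 'C(N.+1, a + b + 1).
Proof.
elim: N b => [|N IH] b.
  rewrite big_ord1 /= bin0n.
  case: a => [|a]; case: b => [|b] //=; rewrite ?muln0 ?mul0n //;
  by rewrite bin_small //; lia.
rewrite big_ord_recr /= subnn.
case: b => [|b].
  rewrite addn0 bin0 muln1.
  rewrite (eq_bigr (fun i : 'I_N.+1 => 'C(i, a) * 'C(N - i, 0))); last first.
    by move=> i _; rewrite !bin0.
  by rewrite IH addn0 addn1 [in RHS]binS addnC.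
rewrite bin0n muln0 addn0.
rewrite (eq_bigr (fun i : 'I_N.+1 => 'C(i, a) * 'C(N - i, b.+1) + 'C(i, a) * 'C(N - i, b))); last first.
  move=> i _ /=; rewrite subSn; last by have := ltn_ord i.
  by rewrite binS mulnDr.
rewrite big_split /= !IH.
have -> : a + b.+1 + 1 = (a + b + 1).+1 by lia.
by rewrite [in RHS]binS.
Qed.

Lemma tot N K r : 0 < r -> r <= K -> K <= N ->
  \sum_(r <= j < N.+1) 'C(j.-1, r.-1) * 'C(N - j, K - r) = 'C(N, K).
Proof.
move=> r0 rK KN.
have h1 : \sum_(1 <= j < N.+1) 'C(j.-1, r.-1) * 'C(N - j, K - r) =
          \sum_(r <= j < N.+1) 'C(j.-1, r.-1) * 'C(N - j, K - r).
  rewrite (@big_cat_nat _ _ _ r 1 N.+1) //=; last by lia.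
  rewrite big_nat_cond big1 ?add0n // => j /andP[/andP[j1 jr] _].
  by rewrite bin_small ?mul0n //; lia.
rewrite -h1 big_add1 /=.
case: N KN h1 => [|N'] KN h1; first lia.
rewrite /= big_mkord.
rewrite (eq_bigr (fun i : 'I_N'.+1 => 'C(i, r.-1) * 'C(N' - i, K - r))); last first.
  by move=> i _ /=; rewrite subSS.
rewrite Ssum; congr 'C(_, _); lia.
Qed.

Lemma part N K r lo hi : 0 < r -> r <= K -> K <= N -> r <= lo -> hi <= N.+1 ->
  \sum_(lo <= j < hi) 'C(j.-1, r.-1) * 'C(N - j, K - r) <= 'C(N, K).
Proof.
move=> r0 rK KN rlo hiN.
case: (leqP hi lo) => hl; first by rewrite big_geq.
rewrite -(tot r0 rK KN) (@big_cat_nat _ _ _ lo r N.+1) //=; last by lia.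
rewrite (@big_cat_nat _ _ _ hi lo N.+1) //=; last by lia.
by rewrite addnCA leq_addr.
Qed.
Lemma fid N K n r : r <= K -> K <= N -> r <= n -> n <= N -> K - r <= N - n ->
  'C(N, K) * 'C(K, r) * 'C(N - K, n - r) = 'C(N, n) * 'C(n, r) * 'C(N - n, K - r).
Proof.
move=> rK KN rn nN h.
have e : N - K - (n - r) = N - n - (K - r) by lia.
set P := r`! * (K - r)`! * (n - r)`! * (N - n - (K - r))`!.
have P0 : 0 < P by rewrite /P !muln_gt0 !fact_gt0.
apply/eqP; rewrite -(eqn_pmul2r P0); apply/eqP.
transitivity N`!.
  have -> : 'C(N, K) * 'C(K, r) * 'C(N - K, n - r) * P =
    'C(N, K) * ('C(K, r) * (r`! * (K - r)`!)) * ('C(N - K, n - r) * ((n - r)`! * (N - K - (n - r))`!)).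
    by rewrite /P e; ring.
  rewrite !bin_fact //; last by lia.
  by rewrite -mulnA bin_fact.
have -> : 'C(N, n) * 'C(n, r) * 'C(N - n, K - r) * P =
  'C(N, n) * ('C(n, r) * (r`! * (n - r)`!)) * ('C(N - n, K - r) * ((K - r)`! * (N - n - (K - r))`!)).
  by rewrite /P; ring.
rewrite !bin_fact //.
by rewrite -mulnA bin_fact.
Qed.

Local Open Scope ring_scope.

Lemma sum_bound (R : realFieldType) N M r n K lo hi :
  (0 < r)%N -> (r <= M)%N -> (M <= N)%N -> (r <= K)%N -> (K <= N)%N ->
  (K - r <= N - n)%N -> (r <= lo)%N -> (hi <= N.+1)%N ->
  (forall j, (lo <= j < hi)%N ->
     ('C(N - j, M - r) * 'C(N - n, K - r) <= 'C(N - n, M - r) * 'C(N - j, K - r))%N) ->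
  \sum_(lo <= j < hi) ihg_pmf R N M r j <= ihg_bound1 R N M r n K.
Proof.
move=> r0 rM MN rK KN hK rlo hiN hj.
have cM : ('C(N, M))%:R != 0 :> R by rewrite pnatr_eq0 -lt0n bin_gt0.
have cK : ('C(N, K))%:R != 0 :> R by rewrite pnatr_eq0 -lt0n bin_gt0.
have cnK : ('C(N - n, K - r))%:R != 0 :> R by rewrite pnatr_eq0 -lt0n bin_gt0.
set B := ihg_bound1 R N M r n K.
have B0 : 0 <= B by rewrite /B /ihg_bound1 divr_ge0 ?ler0n.
apply: (@le_trans _ _ (\sum_(lo <= j < hi) B * ihg_pmf R N K r j)).
  rewrite big_nat_cond [X in _ <= X]big_nat_cond.
  apply: ler_sum => j /andP[jr _].
  have := hj j jr => hjj.
  rewrite /B /ihg_bound1 /ihg_pmf !natrM.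
  set c := ('C(j.-1, r.-1))%:R : R.
  have e1 : c * ('C(N - j, M - r))%:R / ('C(N, M))%:R =
     (c * (('C(N - j, M - r))%:R * ('C(N - n, K - r))%:R)) / (('C(N, M))%:R * ('C(N - n, K - r))%:R).
    by field; rewrite cM cnK.
  have e2 : ('C(N, K))%:R * ('C(N - n, M - r))%:R / (('C(N, M))%:R * ('C(N - n, K - r))%:R) *
    (c * ('C(N - j, K - r))%:R / ('C(N, K))%:R) =
     (c * (('C(N - n, M - r))%:R * ('C(N - j, K - r))%:R)) / (('C(N, M))%:R * ('C(N - n, K - r))%:R).
    by field; rewrite cM cnK cK.
  rewrite e1 e2; apply: ler_wpM2r; first by rewrite invr_ge0 mulr_ge0 ?ler0n.
  apply: ler_wpM2l; first by rewrite ler0n.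
  by rewrite -!natrM ler_nat.
rewrite -mulr_sumr -[X in _ <= X]mulr1; apply: ler_wpM2l => //.
rewrite /ihg_pmf -mulr_suml -natr_sum ler_pdivrMr; last by rewrite ltr0n bin_gt0.
by rewrite mul1r ler_nat; apply: part.
Qed.

Lemma bound_eq (R : realFieldType) N M r n K :
  (0 < r)%N -> (r <= M)%N -> (M <= N)%N -> (r <= K)%N -> (K <= N)%N ->
  (r <= n)%N -> (n <= N)%N -> (K - r <= N - n)%N -> (M - r <= N - n)%N ->
  ihg_bound1 R N M r n K = ihg_bound2 R N M r n K.
Proof.
move=> r0 rM MN rK KN rn nN hK hM.
rewrite /ihg_bound1 /ihg_bound2; apply/eqP; rewrite eqr_div; first last.
- by rewrite pnatr_eq0 -lt0n muln_gt0 !bin_gt0 rK /=; lia.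
- by rewrite pnatr_eq0 -lt0n muln_gt0 !bin_gt0 MN hK.
rewrite -!natrM eqr_nat; apply/eqP.
transitivity (('C(N, K) * 'C(K, r) * 'C(N - K, n - r)) * 'C(N - n, M - r))%N; first by ring.
rewrite fid //.
symmetry.
transitivity (('C(N, M) * 'C(M, r) * 'C(N - M, n - r)) * 'C(N - n, K - r))%N; first by ring.
rewrite fid //.
ring.
Qed.

Theorem corollary6 (R : realFieldType) (N M r : nat) (Mhat : nat -> nat) :
  (0 < r)%N -> (r <= M)%N -> (M <= N)%N ->
  (forall n, ihg_support R N M r n -> (r <= Mhat n <= N)%N) ->
  forall n, ihg_support R N M r n ->
    ((M <= Mhat n)%N -> 'C(N - n, Mhat n - r) != 0%N ->
       ihg_cdf_le R N M r n <= ihg_bound1 R N M r n (Mhat n) /\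
       ihg_bound1 R N M r n (Mhat n) = ihg_bound2 R N M r n (Mhat n)) /\
    ((Mhat n <= M)%N ->
       ihg_cdf_ge R N M r n <= ihg_bound1 R N M r n (Mhat n) /\
       ihg_bound1 R N M r n (Mhat n) = ihg_bound2 R N M r n (Mhat n)).
Proof.
move=> r0 rM MN hMh n supp.
have /andP[rK KN] := hMh n supp.
move: supp => /and3P[rn nN pos].
have hM : (M - r <= N - n)%N.
  rewrite -bin_gt0 lt0n; apply/negP => /eqP h.
  by move: pos; rewrite /ihg_pmf h muln0 mul0r ltxx.
split.
  move=> MK /negP hc.
  have hK : (Mhat n - r <= N - n)%N.
    by rewrite -bin_gt0 lt0n; apply/negP.
  split; last exact: bound_eq.
  apply: sum_bound => // j /andP[rj jn].
  apply: bin_ratio; lia.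
move=> KM.
have hK : (Mhat n - r <= N - n)%N by lia.
split; last exact: bound_eq.
apply: sum_bound => // j /andP[nj jN].
rewrite mulnC [X in (_ <= X)%N]mulnC.
apply: bin_ratio; lia.
Qed.
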